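(* Let $\mathcal I$ be a chore allocation instance with two agents $N=\{1,2\}$, labelled so that $s_1\le s_2$, and let $\langle X_1,X_2\rangle$ be the output of Algorithm $\mathsf{DivCho}$ on $\mathcal I$. Then for each $i\in\{1,2\}$, $V_i(X_i)\ge\frac32\mathsf{WMMS}_i(\mathcal I)\ge\frac32\mathsf{OWMMS}_i(\mathcal I)$.
   Context: A chore allocation instance: agents $N$, chores $M$, additive valuations $V_i$ with $V_i(\{j\})\le0$ and $V_i(M)=-1$, shares $s_i\in(0,1]$ with $\sum_is_i=1$. An allocation is an ordered partition of $M$ into $|N|$ possibly empty bundles. $\mathsf{WMMS}_i(\mathcal I):=\max_{\langle Y_1,\dots,Y_n\rangle}\min_{k\in N}V_i(Y_k)\frac{s_i}{s_k}$ over all allocations; a partition attaining this maximum is a P-$i$ partition. The OWMMS ratio $\alpha^*$ is the minimal $\alpha\ge1$ such that some allocation has $V_i(X_i)\ge\alpha\,\mathsf{WMMS}_i(\mathcal I)$ for all $i$, and $\mathsf{OWMMS}_i(\mathcal I):=\alpha^*\mathsf{WMMS}_i(\mathcal I)$. Algorithm $\mathsf{DivCho}$ (with $s_1\le s_2$): if $s_1\le\frac13$ and $s_2\ge\frac23$, output $X_1=\emptyset$, $X_2=M$. Otherwise, agent 2 partitions $M$ into $\langle A_1,A_2\rangle$ according to a P-2 partition; agent 1 chooses the bundle among $A_1,A_2$ of highest value $V_1$, which becomes $X_1$, and the other bundle becomes $X_2$. *)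

(* Defs.v *)
From mathcomp Require Import all_boot all_order all_algebra.
Set Implicit Arguments. Unset Strict Implicit. Unset Printing Implicit Defensive.
Import Order.TTheory GRing.Theory Num.Theory.
Local Open Scope ring_scope.

(* An allocation of chores M to agents 'I_n is an ordered partition of M into
   n (possibly empty) bundles, represented by X : {ffun M -> 'I_n}
   (chore j goes to agent X j). *)
Definition bundle (M : finType) (n : nat) (X : {ffun M -> 'I_n}) (k : 'I_n)
  : {set M} := [set j | X j == k].

Definition valS (R : realFieldType) (M : finType) (u : M -> R) (S : {set M}) : R :=
  \sum_(j in S) u j.

Definition is_instance (R : realFieldType) (M : finType) (n : nat)
  (v : 'I_n -> M -> R) (s : 'I_n -> R) : Prop :=
  [/\ (forall i j, v i j <= 0),
      (forall i, valS (v i) [set: M] = -1),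
      (forall i, 0 < s i /\ s i <= 1) &
      \sum_(i < n) s i = 1].

(* min_k V_i(Y_k) * s_i / s_k  (the seed is the k = i term, so this is the min
   over all k : 'I_n). *)
Definition wmin (R : realFieldType) (M : finType) (n : nat)
  (v : 'I_n -> M -> R) (s : 'I_n -> R) (i : 'I_n) (Y : {ffun M -> 'I_n}) : R :=
  \big[Num.min/ valS (v i) (bundle Y i) * (s i / s i)]_(k < n)
     (valS (v i) (bundle Y k) * (s i / s k)).

Definition WMMS (R : realFieldType) (M : finType) (n : nat)
  (v : 'I_n -> M -> R) (s : 'I_n -> R) (i : 'I_n) : R :=
  \big[Num.max/ wmin v s i [ffun => i]]_(Y : {ffun M -> 'I_n}) wmin v s i Y.

Definition P_partition (R : realFieldType) (M : finType) (n : nat)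
  (v : 'I_n -> M -> R) (s : 'I_n -> R) (i : 'I_n) (Y : {ffun M -> 'I_n}) : Prop :=
  wmin v s i Y = WMMS v s i.

Definition alpha_feasible (R : realFieldType) (M : finType) (n : nat)
  (v : 'I_n -> M -> R) (s : 'I_n -> R) (alpha : R) : Prop :=
  exists X : {ffun M -> 'I_n},
    forall i, alpha * WMMS v s i <= valS (v i) (bundle X i).

Definition is_OWMMS_ratio (R : realFieldType) (M : finType) (n : nat)
  (v : 'I_n -> M -> R) (s : 'I_n -> R) (alpha : R) : Prop :=
  [/\ 1 <= alpha, alpha_feasible v s alpha &
      forall beta, 1 <= beta -> alpha_feasible v s beta -> alpha <= beta].

Definition OWMMS (R : realFieldType) (M : finType) (n : nat)
  (v : 'I_n -> M -> R) (s : 'I_n -> R) (alpha : R) (i : 'I_n) : R :=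
  alpha * WMMS v s i.

Definition agent1 : 'I_2 := ord0.
Definition agent2 : 'I_2 := ord_max.

(* X is a possible output of DivCho (any P-2 partition, any tie-breaking). *)
Definition DivCho_output (R : realFieldType) (M : finType)
  (v : 'I_2 -> M -> R) (s : 'I_2 -> R) (X : {ffun M -> 'I_2}) : Prop :=
  if (s agent1 <= 1/3) && (2/3 <= s agent2) then X = [ffun => agent2]
  else exists A : {ffun M -> 'I_2},
    P_partition v s agent2 A /\
    exists c : 'I_2,
      (forall d : 'I_2, valS (v agent1) (bundle A d) <= valS (v agent1) (bundle A c)) /\
      X = [ffun j => if A j == c then agent1 else agent2].

(* Main.v *)
Require Import Defs.
From mathcomp Require Import all_boot all_order all_algebra.
From mathcomp Require Import lra.
Import Order.TTheory GRing.Theory Num.Theory.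
Local Open Scope ring_scope.

Lemma two_cases (k : 'I_2) : k = agent1 \/ k = agent2.
Proof.
case: k => [[|[|m]]] H; [left|right|]; try by apply/val_inj.
by [].
Qed.

Lemma neq_agent1 (k : 'I_2) : (k != agent1) = (k == agent2).
Proof. by case: (two_cases k) => ->. Qed.

Lemma bigmin_le_seq (R : realFieldType) (T : eqType) (r : seq T) (F : T -> R) x0 k :
  k \in r -> \big[Num.min/x0]_(j <- r) F j <= F k.
Proof.
elim: r => // a r IH; rewrite in_cons big_cons => /orP [/eqP->|H].
  by rewrite ge_min lexx.
by rewrite ge_min IH ?orbT.
Qed.

Lemma wmin_le (R : realFieldType) (M : finType) (v : 'I_2 -> M -> R) s i Y k :
  wmin v s i Y <= valS (v i) (bundle Y k) * (s i / s k).
Proof. by rewrite /wmin; apply: bigmin_le_seq; rewrite mem_index_enum. Qed.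

Lemma sum_bundles (R : realFieldType) (M : finType) (u : M -> R) (Y : {ffun M -> 'I_2}) :
  valS u (bundle Y agent1) + valS u (bundle Y agent2) = valS u [set: M].
Proof.
rewrite /valS [in RHS](bigID (fun j => Y j == agent1)) /=.
by congr (_ + _); apply: eq_bigl => j; rewrite !inE ?neq_agent1.
Qed.

Lemma ssum (R : realFieldType) (s : 'I_2 -> R) :
  \sum_(i < 2) s i = s agent1 + s agent2.
Proof.
rewrite big_ord_recl big_ord1; congr (_ + _); congr (s _); exact/val_inj.
Qed.

Lemma W_upper (R : realFieldType) (M : finType) (v : 'I_2 -> M -> R) s i :
  is_instance v s -> WMMS v s i <= - s i.
Proof.
case=> hv hV hs hsum; rewrite ssum in hsum.
have key : forall Y, wmin v s i Y <= - s i.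
  move=> Y; set m := wmin v s i Y.
  have h0 := @wmin_le _ _ v s i Y agent1; have h1 := @wmin_le _ _ v s i Y agent2.
  have hsb := @sum_bundles _ _ (v i) Y; rewrite hV in hsb.
  move: h0 h1 hsb; rewrite -/m.
  set a := valS _ (bundle Y agent1); set b := valS _ (bundle Y agent2).
  have [p0 _] := hs agent1; have [p1 _] := hs agent2.
  rewrite !mulrA !ler_pdivlMr // => h0 h1 hab.
  have : m * s agent1 + m * s agent2 <= a * s i + b * s i by apply: lerD.
  by rewrite -mulrDr -mulrDl hsum hab mulr1 mulN1r.
rewrite /WMMS; apply: (big_ind (fun x => x <= - s i)) => //.
by move=> x y hx hy; rewrite ge_max hx hy.
Qed.

Lemma val_nonpos (R : realFieldType) (M : finType) (v : 'I_2 -> M -> R) s i S :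
  is_instance v s -> valS (v i) S <= 0.
Proof. by case=> hv _ _ _; apply: sumr_le0 => j _; apply: hv. Qed.

Theorem theorem2 (R : realFieldType) (M : finType)
  (v : 'I_2 -> M -> R) (s : 'I_2 -> R) (X : {ffun M -> 'I_2}) :
  is_instance v s ->
  s agent1 <= s agent2 ->
  DivCho_output v s X ->
  forall i : 'I_2,
    3/2 * WMMS v s i <= valS (v i) (bundle X i) /\
    (forall alpha, is_OWMMS_ratio v s alpha ->
       3/2 * OWMMS v s alpha i <= 3/2 * WMMS v s i).
Proof.
move=> hI hle hD i.
have hW := fun k => @W_upper _ _ v s k hI.
have [hv hV hs hsum] := hI; rewrite ssum in hsum.
have [p0 _] := hs agent1; have [p1 _] := hs agent2.
have Wi := hW i; have [pi _] := hs i.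
split; last first.
  move=> alpha [h1 _ _]; rewrite /OWMMS.
  apply: ler_wpM2l; first lra.
  set W := WMMS v s i in Wi *.
  have : (alpha - 1) * W <= 0 by apply: mulr_ge0_le0; lra.
  lra.
move: hD; rewrite /DivCho_output.
case: ifP => [/andP [h1 h2] -> | hn].
  case: (two_cases i) => -> .
    have -> : bundle ([ffun=> agent2] : {ffun M -> 'I_2}) agent1 = set0.
      by apply/setP => j; rewrite !inE ffunE.
    rewrite /valS big_set0; have := hW agent1; lra.
  have -> : bundle ([ffun=> agent2] : {ffun M -> 'I_2}) agent2 = [set: M].
    by apply/setP => j; rewrite !inE ffunE eqxx.
  rewrite hV; have := hW agent2; lra.
have hs1 : 1/3 < s agent1.
  rewrite ltNge; apply/negP => h; move: hn; rewrite h /=.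
  have -> : 2/3 <= s agent2 by lra.
  by [].
case=> A [hP [c [hc ->]]].
case: (two_cases i) => ->.
  have -> : bundle [ffun j => if A j == c then agent1 else agent2] agent1 = bundle A c.
    by apply/setP => j; rewrite !inE ffunE; case: (A j == c).
  have hsb := @sum_bundles _ _ (v agent1) A; rewrite hV in hsb.
  have := hc agent1; have := hc agent2; have := hW agent1; lra.
have hW2 := hW agent2.
suff : WMMS v s agent2 <= valS (v agent2)
    (bundle [ffun j => if A j == c then agent1 else agent2] agent2) by lra.
have [c' ->] : exists c', bundle [ffun j => if A j == c then agent1 else agent2] agent2
                        = bundle A c'.
  case: (two_cases c) => ->; [exists agent2 | exists agent1];
    apply/setP => j; rewrite !inE ffunE.
    by case: (two_cases (A j)) => ->.
  by case: (two_cases (A j)) => ->.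
rewrite -hP.
apply: (le_trans (@wmin_le _ _ v s agent2 A c')).
set x := valS _ _.
have hx : x <= 0 by exact: (@val_nonpos _ _ v s agent2 _ hI).
have [pc _] := hs c'.
have hf : 1 <= s agent2 / s c'.
  rewrite ler_pdivlMr // mul1r.
  by case: (two_cases c') => ->.
have : x * (s agent2 / s c' - 1) <= 0 by apply: mulr_le0_ge0; lra.
lra.
Qed.
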